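(* Let $\mathcal X=\mathcal X_1\times\cdots\times\mathcal X_b$, $\mathcal X_i=\mathbb R^{m_i\times n_i}$ with trace inner product and arbitrary norms $\|\cdot\|_{(i)}$ (dual norms $\|\cdot\|_{(i)\star}$). Let $f:\mathcal X\to\mathbb R$ be continuously differentiable with $f\ge f^\star$. Let $\mathcal D$ be a probability distribution on subsets of $[b]$ and assume there are constants $L^0_{i,S},L^1_{i,S}\ge0$ ($S\in\operatorname{supp}(\mathcal D)$) such that for every $S\in\operatorname{supp}(\mathcal D)$, $X\in\mathcal X$ and $\Gamma$ with $\Gamma_i=0$ for $i\notin S$, $$f(X+\Gamma)-f(X)-\langle\nabla f(X),\Gamma\rangle\le\sum_{i\in S}\frac{L^0_{i,S}+L^1_{i,S}\|\nabla_if(X)\|_{(i)\star}}2\|\Gamma_i\|_{(i)}^2.$$ Fix $\varepsilon>0$. From $X^0$, for $k=0,1,\dots$ draw $S^k\sim\mathcal D$ i.i.d., set $X_i^{k+1}=X_i^k-\gamma_i^k(\nabla_if(X^k))^\sharp$ for $i\in S^k$ and $X_i^{k+1}=X_i^k$ otherwise, with $\gamma_i^k=(L^0_{i,S^k}+L^1_{i,S^k}\|\nabla_if(X^k)\|_{(i)\star})^{-1}$. Let $\hat S\sim\mathcal D$, $\delta^0=f(X^0)-f^\star$ and $w_i=\dfrac{\Pr(i\in\hat S)}{\mathbb E[L^1_{i,\hat S}\mid i\in\hat S]}$. Then to guarantee $$\min_{k=0,\dots,K-1}\sum_{i=1}^b\frac{w_i}{\frac1b\sum_{l=1}^bw_l}\mathbb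 E\big[\|\nabla_if(X^k)\|_{(i)\star}\big]\le\varepsilon,$$ it suffices to run the method for $$K=\left\lceil\frac{2\delta^0\sum_{i=1}^b\frac{\Pr(i\in\hat S)\,\mathbb E[L^0_{i,\hat S}\mid i\in\hat S]}{\left(\mathbb E[L^1_{i,\hat S}\mid i\in\hat S]\right)^2}}{\varepsilon^2\left(\frac1b\sum_{l=1}^bw_l\right)^2}+\frac{2\delta^0}{\varepsilon\left(\frac1b\sum_{l=1}^bw_l\right)}\right\rceil$$ iterations.
   Context: $\operatorname{supp}(\mathcal D)$ is the collection of subsets of $[b]$ with positive probability. For $G\in\mathcal X_i$, $G^\sharp$ is an element of $\arg\max_Z\{\langle G,Z\rangle-\frac12\|Z\|_{(i)}^2\}$. Expectations are over the random sets $S^k$. *)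

(* Defs.v *)
From HB Require Import structures.
From mathcomp Require Import all_boot all_order all_algebra.
From mathcomp Require Import boolp classical_sets reals.
Set Implicit Arguments. Unset Strict Implicit. Unset Printing Implicit Defensive.
Import Order.TTheory GRing.Theory Num.Theory.
Local Open Scope ring_scope.
Local Open Scope classical_set_scope.

Section BlockDefs.
Variable R : realType.

Definition tip (p q : nat) (A B : 'M[R]_(p, q)) : R := \tr (A^T *m B).

Definition is_norm (p q : nat) (N : 'M[R]_(p, q) -> R) : Prop :=
  [/\ forall x, 0 <= N x,
      forall x, N x = 0 -> x = 0,
      forall (a : R) x, N (a *: x) = `|a| * N x
    & forall x y, N (x + y) <= N x + N y].

Definition dualn (p q : nat) (N : 'M[R]_(p, q) -> R) (G : 'M[R]_(p, q)) : R :=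
  sup [set tip G Z | Z in [set Z | N Z <= 1]].

Variables (b : nat) (m n : 'I_b -> nat).

Definition pt := forall i : 'I_b, 'M[R]_(m i, n i).

Definition padd (X Y : pt) : pt := fun i => X i + Y i.
Definition psub (X Y : pt) : pt := fun i => X i - Y i.
Definition pip (X Y : pt) : R := \sum_(i < b) tip (X i) (Y i).
(* an auxiliary (l1 of entries) norm, used only to define differentiability
   and continuity; all norms on a finite-dimensional space are equivalent *)
Definition pl1 (X : pt) : R :=
  \sum_(i < b) \sum_(r < m i) \sum_(c < n i) `|X i r c|.

Definition is_C1_with_grad (f : pt -> R) (g : pt -> pt) : Prop :=
  (forall X (e : R), 0 < e -> exists2 d : R, 0 < d &
     forall H, pl1 H < d -> `|f (padd X H) - f X - pip (g X) H| <= e * pl1 H)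
  /\
  (forall X (e : R), 0 < e -> exists2 d : R, 0 < d &
     forall Y, pl1 (psub Y X) < d -> pl1 (psub (g Y) (g X)) < e).

Definition is_distr (D : {ffun {set 'I_b} -> R}) : Prop :=
  (forall S, 0 <= D S) /\ \sum_(S : {set 'I_b}) D S = 1.

Definition prob_in (D : {ffun {set 'I_b} -> R}) (i : 'I_b) : R :=
  \sum_(S : {set 'I_b} | i \in S) D S.
Definition cond_exp (D : {ffun {set 'I_b} -> R}) (L : 'I_b -> {set 'I_b} -> R)
    (i : 'I_b) : R :=
  (\sum_(S : {set 'I_b} | i \in S) D S * L i S) / prob_in D i.

Unset Implicit Arguments.
Variables (nrm : forall i : 'I_b, 'M[R]_(m i, n i) -> R)
          (sharp : forall i : 'I_b, 'M[R]_(m i, n i) -> 'M[R]_(m i, n i))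
          (g : pt -> pt) (L0 L1 : 'I_b -> {set 'I_b} -> R).
Set Implicit Arguments.

Definition step (S : {set 'I_b}) (X : pt) : pt := fun i =>
  if i \in S then
    X i - (L0 i S + L1 i S * dualn (nrm i) (g X i))^-1 *: sharp i (g X i)
  else X i.

Definition iterate (X0 : pt) (s : seq {set 'I_b}) : pt :=
  foldl (fun X S => step S X) X0 s.

(* E[ ||nabla_i f(X^k)||_(i)* ] over i.i.d. S^0, ..., S^{k-1} ~ D *)
Definition exp_gradnorm (D : {ffun {set 'I_b} -> R}) (X0 : pt) (k : nat)
    (i : 'I_b) : R :=
  \sum_(t : k.-tuple {set 'I_b})
     (\prod_(S <- t) D S) * dualn (nrm i) (g (iterate X0 t) i).

End BlockDefs.

(* Main.v *)
Require Import Defs.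
From HB Require Import structures.
From mathcomp Require Import all_boot all_order all_algebra.
From mathcomp Require Import boolp classical_sets reals.
From mathcomp Require Import ring lra.
Import Order.TTheory GRing.Theory Num.Theory.
Local Open Scope ring_scope.
Local Open Scope classical_set_scope.

Lemma tipZ (R : realType) p q (G Z : 'M[R]_(p, q)) a : tip G (a *: Z) = a * tip G Z.
Proof. by rewrite /tip -scalemxAr mxtraceZ. Qed.

Lemma tip0 (R : realType) p q (G : 'M[R]_(p, q)) : tip G 0 = 0.
Proof. by rewrite /tip mulmx0 mxtrace0. Qed.

Lemma norm0 (R : realType) p q (N : 'M[R]_(p, q) -> R) : is_norm N -> N 0 = 0.
Proof. by case=> _ _ hZ _; have := hZ 0 0; rewrite scale0r normr0 mul0r. Qed.

Lemma dual_facts (R : realType) p q (N : 'M[R]_(p, q) -> R) (sh : 'M[R]_(p,q) -> 'M[R]_(p,q)) G :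
  is_norm N ->
  (forall Z, tip G Z - N Z ^+ 2 / 2 <= tip G (sh G) - N (sh G) ^+ 2 / 2) ->
  0 <= dualn N G /\ dualn N G ^+ 2 / 2 <= tip G (sh G) - N (sh G) ^+ 2 / 2.
Proof.
move=> hN hs; set v := tip G (sh G) - _.
have [hN0 _ hZ _] := hN.
set E := [set tip G Z | Z in [set Z | N Z <= 1]].
have key : forall a, E a -> forall t, 0 <= t -> t * a - t ^+ 2 / 2 <= v.
  move=> a [Z /= HZ <-] t t0; have := hs (t *: Z).
  rewrite tipZ hZ ger0_norm // => h; apply: le_trans h.
  have h0 := hN0 Z.
  have h1 : N Z ^+ 2 <= 1 by rewrite expr2; nra.
  have h2 : t ^+ 2 * N Z ^+ 2 <= t ^+ 2 by rewrite ler_piMr // sqr_ge0.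
  rewrite exprMn; lra.
have E0 : E 0 by exists 0; [rewrite /= norm0 // ler01 | exact: tip0].
have v0 : 0 <= v by have := key 0 E0 0 (lexx _); rewrite mulr0 expr0n /= mul0r subr0.
have hub : has_ubound E.
  exists (v + 1/2) => a Ea; have := key a Ea 1 ler01; rewrite mul1r expr1n; lra.
have d0 : 0 <= dualn N G by exact: (ub_le_sup hub E0).
split => //.
rewrite /dualn -/E in d0 *.
set d := sup E in d0 *.
have [->|dpos] := eqVneq d 0; first by rewrite expr0n /= mul0r.
have dp : 0 < d by rewrite lt_def dpos d0.
have : d <= (v + d ^+ 2 / 2) / d.
  apply: ge_sup; first by exists 0.
  move=> a Ea; have := key a Ea d d0 => h.
  rewrite ler_pdivlMr //; nra.
rewrite ler_pdivlMr //; nra.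
Qed.

Lemma sum_tuple_cons (R : nmodType) (T : finType) k (G : k.+1.-tuple T -> R) :
  \sum_(t : k.+1.-tuple T) G t = \sum_(x : T) \sum_(t : k.-tuple T) G [tuple of x :: t].
Proof.
rewrite pair_big /=.
pose h (p : T * k.-tuple T) : k.+1.-tuple T := [tuple of p.1 :: p.2].
pose hi (t : k.+1.-tuple T) : T * k.-tuple T := (thead t, behead_tuple t).
rewrite (reindex h) //=.
exists hi => [[x t] _|t _].
  by rewrite /hi /h /= theadE; congr pair; apply: val_inj.
by rewrite /h /hi /= [RHS]tuple_eta.
Qed.

Lemma alg_gv (R : realFieldType) (u A : R) : 0 < u -> 0 <= A ->
  u / (u + A) * u - (u / (u + A)) ^+ 2 / 2 * (u + A) = u ^+ 2 / (2 * (u + A)).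
Proof. move=> u0 A0; field; rewrite ?mulf_neq0 // gt_eqF //; lra. Qed.

Lemma alg_b0 (R : realFieldType) (u A dl : R) : 0 < u -> 0 <= A -> 0 <= dl ->
  0 <= 2 * dl * A / u ^+ 2 + 2 * dl / u.
Proof.
move=> u0 A0 d0; apply: addr_ge0; apply: divr_ge0; rewrite ?mulr_ge0 ?sqr_ge0 //; lra.
Qed.

Lemma alg_final (R : realFieldType) (u A dl Kr S : R) : 0 < u -> 0 <= A -> 0 <= dl ->
  2 * dl * A / u ^+ 2 + 2 * dl / u <= Kr -> S <= dl ->
  Kr * (u ^+ 2 / (2 * (u + A))) < S -> False.
Proof.
move=> u0 A0 d0 hK hS hlt.
have g0 : 0 < u ^+ 2 / (2 * (u + A)) by rewrite divr_gt0 ?exprn_gt0 // mulr_gt0 //; lra.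
have e : (2 * dl * A / u ^+ 2 + 2 * dl / u) * (u ^+ 2 / (2 * (u + A))) = dl.
  field; rewrite ?mulf_neq0 ?gt_eqF //; lra.
have := ler_wpM2r (ltW g0) hK; rewrite e; lra.
Qed.

Section Main.
Variables (R : realType) (b : nat) (m n : 'I_b -> nat)
  (nrm : forall i : 'I_b, 'M[R]_(m i, n i) -> R)
  (sharp : forall i : 'I_b, 'M[R]_(m i, n i) -> 'M[R]_(m i, n i))
  (f : pt R m n -> R) (g : pt R m n -> pt R m n) (fstar : R)
  (D : {ffun {set 'I_b} -> R}) (L0 L1 : 'I_b -> {set 'I_b} -> R).
Hypotheses (Hnorm : forall i, is_norm (nrm i))
  (Hlow : forall X, fstar <= f X)
  (HL : forall i S, 0 < D S -> 0 <= L0 i S /\ 0 <= L1 i S)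
  (Hsmooth : forall S, 0 < D S -> forall (X Gam : pt R m n),
     (forall i, i \notin S -> Gam i = 0) ->
     f (padd X Gam) - f X - pip (g X) Gam <=
       \sum_(i in S) (L0 i S + L1 i S * dualn (nrm i) (g X i)) / 2
                       * nrm i (Gam i) ^+ 2)
  (Hsharp : forall i G Z, tip G Z - nrm i Z ^+ 2 / 2
                 <= tip G (sharp i G) - nrm i (sharp i G) ^+ 2 / 2).

Let d X i := dualn (nrm i) (g X i).
Let ell S X i := L0 i S + L1 i S * d X i.
Let sh X i := sharp i (g X i).
Let v X i := tip (g X i) (sh X i) - nrm i (sh X i) ^+ 2 / 2.

Lemma d_ge0 X i : 0 <= d X i.
Proof. by have [] := @dual_facts _ _ _ _ _ _ (Hnorm i) (Hsharp i (g X i)). Qed.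

Lemma dv X i : d X i ^+ 2 / 2 <= v X i.
Proof. by have [] := @dual_facts _ _ _ _ _ _ (Hnorm i) (Hsharp i (g X i)). Qed.

Lemma ell_ge0 S X i : 0 < D S -> 0 <= ell S X i.
Proof.
move=> DS; have [h0 h1] := HL i S DS; have := d_ge0 X i.
rewrite /ell; nra.
Qed.

Lemma zero_ell S X i : 0 < D S -> i \in S -> ell S X i = 0 -> d X i = 0.
Proof.
move=> DS iS e0; apply/eqP; apply: contraT => dn0.
have dp : 0 < d X i by rewrite lt_def dn0 d_ge0.
have vp : 0 < v X i by have := dv X i; nra.
have Nn0 := (let: And4 h _ _ _ := Hnorm i in h) (sh X i).
set T := tip (g X i) (sh X i).
have Tp : 0 < T by move: vp; rewrite /v -/T; nra.
pose t := (f X - fstar + 1) / T.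
pose Gam : pt R m n := fun j => if j == i then (- t) *: sharp j (g X j) else 0.
have hG : forall j, j \notin S -> Gam j = 0.
  by move=> j jS; rewrite /Gam; case: eqP => // ej; move: jS; rewrite ej iS.
have := Hsmooth S DS X Gam hG.
have -> : pip (g X) Gam = - t * T.
  rewrite /pip (bigD1 i) //= big1 => [|j ji]; rewrite /Gam ?eqxx ?(negbTE ji) ?tipZ ?tip0 ?addr0 //.
have -> : \sum_(j in S) (L0 j S + L1 j S * dualn (nrm j) (g X j)) / 2 * nrm j (Gam j) ^+ 2 = 0.
  apply: big1 => j jS; rewrite /Gam; case: eqP => [ji|_].
    subst j; have e0' : L0 i S + L1 i S * dualn (nrm i) (g X i) = 0 := e0.
    by rewrite e0' mul0r mul0r.
  by rewrite norm0 // expr0n /= mulr0.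
have tT : t * T = f X - fstar + 1 by rewrite /t divfK // gt_eqF.
have := Hlow (padd X Gam); lra.
Qed.

Lemma step_descent S X (s : 'I_b -> R) : 0 < D S ->
  f (step nrm sharp g L0 L1 S X) - f X <=
  - \sum_(i in S) (s i * d X i - s i ^+ 2 * ell S X i / 2).
Proof.
move=> DS.
pose gam i := (ell S X i)^-1.
pose Gam : pt R m n := fun i => if i \in S then (- gam i) *: sh X i else 0.
have hG : forall j, j \notin S -> Gam j = 0 by move=> j jS; rewrite /Gam (negbTE jS).
have eq : padd X Gam = step nrm sharp g L0 L1 S X.
  apply: functional_extensionality_dep => i; rewrite /padd /step /Gam.
  by case: ifP => _; [rewrite scaleNr | rewrite addr0].
have := Hsmooth S DS X Gam hG; rewrite eq.
have -> : pip (g X) Gam = \sum_(i in S) (- gam i * tip (g X i) (sh X i)).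
  rewrite /pip [RHS]big_mkcond /=; apply: eq_bigr => i _; rewrite /Gam.
  by case: ifP => _; rewrite ?tipZ ?tip0.
have -> : \sum_(i in S) (L0 i S + L1 i S * dualn (nrm i) (g X i)) / 2 * nrm i (Gam i) ^+ 2
   = \sum_(i in S) ell S X i / 2 * (gam i * nrm i (sh X i)) ^+ 2.
  apply: eq_bigr => i iS; rewrite /Gam iS.
  have [_ _ hZ _] := Hnorm i; rewrite hZ normrN ger0_norm //.
  by rewrite /gam invr_ge0 ell_ge0.
suff : \sum_(i in S) (- gam i * tip (g X i) (sh X i)) +
   \sum_(i in S) ell S X i / 2 * (gam i * nrm i (sh X i)) ^+ 2 <=
  - \sum_(i in S) (s i * d X i - s i ^+ 2 * ell S X i / 2) by lra.
rewrite -big_split -sumrN; apply: ler_sum => i iS /=.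
have l0 := ell_ge0 S X i DS.
have d0 := d_ge0 X i.
have hv := dv X i.
rewrite /v in hv.
have [e0|lp] := eqVneq (ell S X i) 0.
  rewrite /gam e0 invr0 (zero_ell S X i DS iS e0).
  idtac.
  lra.
have lpos : 0 < ell S X i by rewrite lt_def lp l0.
have gl : gam i * ell S X i = 1 by rewrite /gam mulVf.
have g0 : 0 <= gam i by rewrite /gam invr_ge0.
set T := tip (g X i) (sh X i) in hv *.
set Nn := nrm i (sh X i) in hv *.
set l := ell S X i in gl lpos *.
set dd := d X i in hv d0 *.
set gg := gam i in gl g0 *.
have h1 : 0 <= gg * (dd - s i * l) ^+ 2 by rewrite mulr_ge0 // sqr_ge0.
have h2 : gg * (dd ^+ 2 / 2) <= gg * (T - Nn ^+ 2 / 2) by rewrite ler_wpM2l.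
have h3 : l / 2 * (gg * Nn) ^+ 2 = gg * (Nn ^+ 2 / 2).
  transitivity ((gg * l) * (gg * (Nn ^+ 2 / 2))); first by ring.
  by rewrite gl mul1r.
rewrite h3.
have h4 : gg * (dd - s i * l) ^+ 2 = gg * dd ^+ 2 - 2 * s i * dd + s i ^+ 2 * l.
  have -> : s i ^+ 2 * l = s i ^+ 2 * l * (gg * l) by rewrite gl mulr1.
  have -> : 2 * s i * dd = 2 * s i * dd * (gg * l) by rewrite gl mulr1.
  ring.
nra.
Qed.

Hypothesis HD : is_distr D.

Lemma DL_ge0 (L : 'I_b -> {set 'I_b} -> R) :
  (forall i S, 0 < D S -> 0 <= L i S) -> forall i S, 0 <= D S * L i S.
Proof.
move=> hL i S; have [h0 _] := HD; have := h0 S; rewrite le_eqVlt => /orP[/eqP <-|DS].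
  by rewrite mul0r.
by rewrite mulr_ge0 ?hL // ltW.
Qed.

Definition Ek k X0 (F : pt R m n -> R) :=
  \sum_(t : k.-tuple {set 'I_b}) (\prod_(S <- t) D S) * F (iterate nrm sharp g L0 L1 X0 t).

Lemma E0 X0 F : Ek 0 X0 F = F X0.
Proof.
rewrite /Ek (eq_bigr (fun _ => F X0)) => [|t _]; last by rewrite tuple0 big_nil mul1r.
by rewrite sumr_const card_tuple expn0.
Qed.

Lemma ES k X0 F : Ek k.+1 X0 F = \sum_S D S * Ek k (step nrm sharp g L0 L1 S X0) F.
Proof.
rewrite /Ek sum_tuple_cons; apply: eq_bigr => S _; rewrite mulr_sumr.
by apply: eq_bigr => t _; rewrite /= big_cons mulrA.
Qed.

Lemma Econst k X0 c : Ek k X0 (fun _ => c) = c.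
Proof.
elim: k X0 => [|k IH] X0; first by rewrite E0.
rewrite ES (eq_bigr (fun S => D S * c)) => [|S _]; last by rewrite IH.
by rewrite -mulr_suml (proj2 HD) mul1r.
Qed.

Lemma EB k X0 F G : Ek k X0 (fun X => F X - G X) = Ek k X0 F - Ek k X0 G.
Proof. by rewrite /Ek -sumrB; apply: eq_bigr => t _; rewrite mulrBr. Qed.

Lemma EZ k X0 F a : Ek k X0 (fun X => a * F X) = a * Ek k X0 F.
Proof. by rewrite /Ek mulr_sumr; apply: eq_bigr => t _; rewrite mulrCA. Qed.

Lemma Esum k X0 (F : 'I_b -> pt R m n -> R) :
  Ek k X0 (fun X => \sum_i F i X) = \sum_i Ek k X0 (F i).
Proof.
rewrite /Ek exchange_big; apply: eq_bigr => t _; by rewrite mulr_sumr.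
Qed.

Lemma Emono k X0 F G : (forall X, F X <= G X) -> Ek k X0 F <= Ek k X0 G.
Proof.
move=> hFG; apply: ler_sum => t _; apply: ler_wpM2l => //.
by apply: prodr_ge0 => S _; exact: (proj1 HD).
Qed.

Lemma Edesc F G : (forall X, \sum_S D S * F (step nrm sharp g L0 L1 S X) <= G X) ->
  forall k X0, Ek k.+1 X0 F <= Ek k X0 G.
Proof.
move=> hFG k; elim: k => [|k IH] X0.
  rewrite ES E0; apply: le_trans (hFG X0); apply: ler_sum => S _.
  by rewrite E0.
rewrite ES [leRHS]ES; apply: ler_sum => S _; apply: ler_wpM2l; first exact: (proj1 HD).
exact: IH.
Qed.

Hypothesis Hp : forall i, 0 < prob_in D i.

Lemma sum_cond (L : 'I_b -> {set 'I_b} -> R) (i : 'I_b) :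
  \sum_(S : {set 'I_b} | i \in S) D S * L i S = prob_in D i * cond_exp D L i.
Proof. by rewrite /cond_exp mulrC divfK // gt_eqF. Qed.

Definition alpha (s : 'I_b -> R) i :=
  s i * prob_in D i - s i ^+ 2 / 2 * (prob_in D i * cond_exp D L1 i).
Definition beta (s : 'I_b -> R) i := s i ^+ 2 / 2 * (prob_in D i * cond_exp D L0 i).

Lemma avg_step s X :
  \sum_S D S * f (step nrm sharp g L0 L1 S X) <=
  f X - \sum_i (alpha s i * d X i - beta s i).
Proof.
have fX : f X = \sum_S D S * f X by rewrite -mulr_suml (proj2 HD) mul1r.
have key : \sum_S D S * (\sum_(i in S) (s i * d X i - s i ^+ 2 * ell S X i / 2))
   = \sum_i (alpha s i * d X i - beta s i).
  under eq_bigr do rewrite mulr_sumr big_mkcond /=.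
  rewrite exchange_big /=; apply: eq_bigr => i _.
  rewrite -big_mkcond /= /alpha /beta -!sum_cond.
  rewrite !mulr_sumr -sumrB mulr_suml -sumrB; apply: eq_bigr => S _.
  rewrite /ell; ring.
rewrite -key.
suff : \sum_S D S * (f (step nrm sharp g L0 L1 S X) - f X) <=
  - \sum_S D S * (\sum_(i in S) (s i * d X i - s i ^+ 2 * ell S X i / 2)).
  rewrite [X in X <= _ -> _](eq_bigr (fun S => D S * f (step nrm sharp g L0 L1 S X) - D S * f X));
    last by move=> S _; rewrite mulrBr.
  rewrite sumrB -fX; lra.
rewrite -sumrN; apply: ler_sum => S _.
have := (proj1 HD) S; rewrite le_eqVlt => /orP[/eqP <-|DS].
  by rewrite !mul0r oppr0.
  rewrite -mulrN. apply: ler_wpM2l; [exact: ltW | exact: step_descent].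
Qed.

Lemma main_bound (Hb : (0 < b)%N) (Hc : forall i, 0 < cond_exp D L1 i) X0 (eps : R) :
  0 < eps ->
  let delta0 := f X0 - fstar in
  let w := fun i => prob_in D i / cond_exp D L1 i in
  let wbar := (\sum_(l < b) w l) / b%:R in
  let bound :=
    2 * delta0 * (\sum_(i < b) prob_in D i * cond_exp D L0 i
                                 / cond_exp D L1 i ^+ 2)
      / (eps ^+ 2 * wbar ^+ 2)
    + 2 * delta0 / (eps * wbar) in
  forall K : nat, K = `|Num.ceil bound|%N -> (0 < K)%N ->
  exists k : 'I_K,
    \sum_(i < b) w i / wbar * exp_gradnorm nrm sharp g L0 L1 D X0 k i <= eps.
Proof.
move=> heps delta0 w wbar bound K hK K0.
set A := \sum_(i < b) prob_in D i * cond_exp D L0 i / cond_exp D L1 i ^+ 2.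
have a0 : forall i, 0 <= cond_exp D L0 i.
  move=> i; rewrite /cond_exp divr_ge0 //; last exact: ltW (Hp i).
  by apply: sumr_ge0 => S _; apply: DL_ge0 => j T DT; have [] := HL j T DT.
have A0 : 0 <= A.
  apply: sumr_ge0 => i _; apply: divr_ge0; first exact: mulr_ge0 (ltW (Hp i)) (a0 i).
  by rewrite exprn_ge0 // ltW ?Hc.
have w0 : forall i, 0 < w i by move=> i; rewrite /w divr_gt0 ?Hp ?Hc.
have ws : 0 < \sum_(l < b) w l.
  rewrite (bigD1 (Ordinal Hb)) //=.
  have := w0 (Ordinal Hb); have : 0 <= \sum_(i < b | i != Ordinal Hb) w i.
    by apply: sumr_ge0 => i _; exact: ltW.
  lra.
have wb : 0 < wbar by rewrite /wbar divr_gt0 // ltr0n.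
have delta00 : 0 <= delta0 by rewrite /delta0 subr_ge0.
set u := eps * wbar.
have u0 : 0 < u by rewrite mulr_gt0.
set th := u / (u + A).
have th0 : 0 < th by rewrite divr_gt0 //; lra.
have th1 : th <= 1 by rewrite ler_pdivrMr; lra.
pose s i := th / cond_exp D L1 i.
have al : forall i, alpha s i = th * (1 - th / 2) * w i.
  move=> i; rewrite /alpha /s /w; have := Hc i; rewrite lt_def => /andP[hc _].
  by field.
have be : forall i, beta s i = th ^+ 2 / 2 * (prob_in D i * cond_exp D L0 i / cond_exp D L1 i ^+ 2).
  move=> i; rewrite /beta /s; have := Hc i; rewrite lt_def => /andP[hc _].
  by field.
pose h X := \sum_i (alpha s i * d X i - beta s i).
have Eh : forall k, Ek k X0 h = th * (1 - th / 2) * \sum_i w i * exp_gradnorm nrm sharp g L0 L1 D X0 k i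
                                 - th ^+ 2 / 2 * A.
  move=> k; rewrite /h Esum.
  under eq_bigr do rewrite EB EZ Econst al be.
  rewrite sumrB /A mulr_sumr mulr_sumr; congr (_ - _); apply: eq_bigr => i _.
  by rewrite -mulrA.
have desc : forall k, Ek k.+1 X0 f <= Ek k X0 f - Ek k X0 h.
  move=> k; rewrite -EB; apply: Edesc => X; exact: avg_step.
have tele : forall k, \sum_(0 <= j < k) Ek j X0 h <= f X0 - Ek k X0 f.
  elim=> [|k IH]; first by rewrite big_geq // E0 subrr.
  rewrite big_nat_recr //=; have := desc k; lra.
have fs : fstar <= Ek K X0 f by rewrite -(Econst K X0 fstar); apply: Emono.
apply/existsP; apply: contraT; rewrite negb_exists => /forallP hall.
set gv := th * u - th ^+ 2 / 2 * (u + A).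
have lt : forall k, (0 <= k < K)%N -> gv < Ek k X0 h.
  move=> k /andP[_ kK]; have := hall (Ordinal kK); rewrite -ltNge /= => hk.
  rewrite Eh.
  have : u < \sum_i w i * exp_gradnorm nrm sharp g L0 L1 D X0 k i.
    move: hk; rewrite /u -ltr_pdivlMr // mulr_suml; congr (_ < _).
    by apply: eq_bigr => i _; rewrite mulrAC.
  have : 0 < th * (1 - th / 2) by rewrite mulr_gt0 //; lra.
  rewrite /gv; nra.
have sumlt : \sum_(0 <= k < K) (fun _ => gv) k < \sum_(0 <= k < K) Ek k X0 h.
  by apply: ltr_sum_nat.
rewrite /= sumr_const_nat subn0 in sumlt.
have := tele K.
have gvE : gv = u ^+ 2 / (2 * (u + A)) by rewrite /gv /th; apply: alg_gv.
have bE : bound = 2 * delta0 * A / u ^+ 2 + 2 * delta0 / u by rewrite /u exprMn.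
have bnd0 : 0 <= bound by rewrite bE; apply: alg_b0.
have Kb : bound <= K%:R.
  rewrite hK natr_absz ger0_norm; first exact: ceil_ge.
  by rewrite ceil_ge0 (lt_le_trans _ bnd0) // ltrN10.
rewrite bE in Kb.
rewrite -mulr_natl gvE in sumlt.
move=> hs; exfalso; apply: (@alg_final _ _ _ _ _ _ u0 A0 delta00 Kb _ sumlt).
by rewrite /delta0; lra.
Qed.
End Main.

Local Close Scope classical_set_scope.
Theorem theorem6 (R : realType) (b : nat) (m n : 'I_b -> nat)
  (nrm : forall i : 'I_b, 'M[R]_(m i, n i) -> R)
  (sharp : forall i : 'I_b, 'M[R]_(m i, n i) -> 'M[R]_(m i, n i))
  (f : pt R m n -> R) (g : pt R m n -> pt R m n) (fstar : R)
  (D : {ffun {set 'I_b} -> R}) (L0 L1 : 'I_b -> {set 'I_b} -> R)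
  (X0 : pt R m n) (eps : R) :
  (0 < b)%N ->
  (forall i, is_norm (nrm i)) ->
  is_C1_with_grad f g ->
  (forall X, fstar <= f X) ->
  is_distr D ->
  (forall i S, 0 < D S -> 0 <= L0 i S /\ 0 <= L1 i S) ->
  (forall S, 0 < D S -> forall (X Gam : pt R m n),
     (forall i, i \notin S -> Gam i = 0) ->
     f (padd X Gam) - f X - pip (g X) Gam <=
       \sum_(i in S) (L0 i S + L1 i S * dualn (nrm i) (g X i)) / 2
                       * nrm i (Gam i) ^+ 2) ->
  (forall i G Z, tip G Z - nrm i Z ^+ 2 / 2
                 <= tip G (sharp i G) - nrm i (sharp i G) ^+ 2 / 2) ->
  (forall i, 0 < prob_in D i) ->
  (forall i, 0 < cond_exp D L1 i) ->
  0 < eps ->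
  let delta0 := f X0 - fstar in
  let w := fun i => prob_in D i / cond_exp D L1 i in
  let wbar := (\sum_(l < b) w l) / b%:R in
  let bound :=
    2 * delta0 * (\sum_(i < b) prob_in D i * cond_exp D L0 i
                                 / cond_exp D L1 i ^+ 2)
      / (eps ^+ 2 * wbar ^+ 2)
    + 2 * delta0 / (eps * wbar) in
  forall K : nat, K = `|Num.ceil bound|%N -> (0 < K)%N ->
  exists k : 'I_K,
    \sum_(i < b) w i / wbar * exp_gradnorm nrm sharp g L0 L1 D X0 k i <= eps.
Proof.
move=> Hb Hnorm _ Hlow HD HL Hsmooth Hsharp Hp Hc heps.
exact: (@main_bound R b m n nrm sharp f g fstar D L0 L1 Hnorm Hlow HL Hsmooth Hsharp HD Hp Hb Hc X0 eps heps).
Qed.
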